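(* Let $\mathcal T$ be a set of at least two binary trees over $L$, let $\mathcal F=\{C_1,\dots,C_k\}$ be an acyclic agreement forest for $\mathcal T$ indexed so that $(C_1,\dots,C_k)$ is a topological ordering of $G(\mathcal T,\mathcal F)$, and let $\sigma$ be a leaf ordering such that for all $i<j$, every $l\in L(C_i)\setminus\{\rho\}$ satisfies $\sigma(l)<\sigma(l')$ for every $l'\in L(C_j)\setminus\{\rho\}$. Fix $i$ with $L(C_i)\setminus\{\rho\}\ne\emptyset$, let $l_s$ be the $\sigma$-first leaf of $L(C_i)\setminus\{\rho\}$, and let $l_j\in L(C_i)$ with $j\ge s$. Then for every $T\in\mathcal T$ there is a vertex $x$ of $T^j$ such that the subtree $(T^j)_x$ is (label-preservingly) isomorphic to $C_i|_{\{l_s,\dots,l_j\}\cap L(C_i)}$, and the vertices of these subtrees are indexed identically across $\mathcal T$: if $T,T'\in\mathcal T$ with corresponding vertices $x,x'$, and $v\in V((T^j)_x)$, $v'\in V((T'^j)_{x'})$ satisfy $L((T^j)_v)=L((T'^j)_{v'})$, then $\sigma(v)=\sigma(v')$ (indices computed in $T^j$ and $T'^j$ respectively).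
   Context: Trees. Fix a finite label set $L$ containing a distinguished label $\rho$, and let $n=|L\setminus\{\rho\}|$. A (planted, binary phylogenetic) tree $T$ over $L$ is a rooted tree whose top vertex is labeled $\rho$ and has exactly one child $r(T)$ (the root), in which every other non-leaf vertex has exactly two children, and whose leaves are bijectively labeled by $L\setminus\{\rho\}$; vertices are identified with their labels. For a vertex $v$, $T_v$ is the subtree rooted at $v$ and $cl(v)=L(T_v)$ is its cluster ($L(\cdot)$ denotes the set of labels of a tree). For $S\subseteq L$, $T(S)$ is the smallest subtree of $T$ containing all vertices labeled by $S$, and $T|_S$ is obtained from $T(S)$ by suppressing all unlabeled vertices with fewer than two children. OLA indexing. A leaf ordering is a bijection $\sigma:L\setminus\{\rho\}\to\{0,\dots,n-1\}$; write $l_i=\sigma^{-1}(i)$. For a binary tree $T$ whose non-$\rho$ labels lie in $L\setminus\{\rho\}$ and a vertex $v\ne\rho$, let $\mu(v)=\min\{\sigma(l): l\in L(T_v)\setminus\{\rho\}\}$; each leaf $l$ gets index $\sigma(l)$, and each internal vertex $v$ (not a leaf, not $\rho$) with children $v_1,v_2$ gets index $\sigma(v):=-\max\{\mu(v_1),\mu(v_2)\}$. Let $T^i:=T|_{\{\rho,l_0,\dots,l_i\}}$. Agreement forests. A forest $\mathcal F=\{C_1,\dots,C_k\}$ of trees with pairwise disjoint label sets agrees with a tree $T$ over $L$ if (i) for each $C_i$, $T|_{L(C_i)}$ is isomorphic to $C_i$ (label-preserving); (ii) the subtrees $T(L(C_i))$ are pairwise vertex-disjoint; (iii) $\bigcup_i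 L(C_i)=L$. $\mathcal F$ is an agreement forest for a set $\mathcal T$ of trees if it agrees with every $T\in\mathcal T$. The inheritance graph $G(\mathcal T,\mathcal F)$ is the directed graph on vertex set $\mathcal F$ with an edge $(C_i,C_j)$, $i\neq j$, iff some $T\in\mathcal T$ contains a directed (root-to-leaf direction) path from the root of $T(L(C_i))$ to the root of $T(L(C_j))$. $\mathcal F$ is an acyclic agreement forest (AAF) if additionally $G(\mathcal T,\mathcal F)$ has no directed cycle. *)

(* Defs.v *)
From mathcomp Require Import all_boot all_order all_algebra.
Set Implicit Arguments. Unset Strict Implicit. Unset Printing Implicit Defensive.
Import GRing.Theory Num.Theory.

Section Trees.
Variable L : finType.

(* Rooted binary trees with leaves labelled in L (children unordered: order of
   the two arguments of Nd is irrelevant, see [iso]). *)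
Inductive btree := Lf of L | Nd of btree & btree.

Fixpoint leaves (t : btree) : seq L :=
  match t with Lf l => [:: l] | Nd a b => leaves a ++ leaves b end.

Definition lset (t : btree) : {set L} := [set x in leaves t].

Fixpoint subtrees (t : btree) : seq btree :=
  t :: match t with Lf _ => [::] | Nd a b => subtrees a ++ subtrees b end.

Fixpoint is_subtree (x t : btree) : Prop :=
  x = t \/ match t with Lf _ => False | Nd a b => is_subtree x a \/ is_subtree x b end.

Fixpoint iso (a b : btree) : bool :=
  match a, b with
  | Lf x, Lf y => x == y
  | Nd a1 a2, Nd b1 b2 => (iso a1 b1 && iso a2 b2) || (iso a1 b2 && iso a2 b1)
  | _, _ => false
  end.

(* t|_X for a rooted tree t without rho: T(X) with suppression of unlabelled
   vertices with fewer than two children; None if X meets no leaf. *)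
Fixpoint restr (X : {set L}) (t : btree) : option btree :=
  match t with
  | Lf l => if l \in X then Some (Lf l) else None
  | Nd a b =>
      match restr X a, restr X b with
      | Some a', Some b' => Some (Nd a' b')
      | Some a', None => Some a'
      | None, r => r
      end
  end.

Variable rho : L.

(* A planted binary phylogenetic tree over L is encoded by its subtree
   below rho (rooted at r(T)); the top vertex rho is implicit. *)
Definition planted_over (t : btree) : bool :=
  uniq (leaves t) && (lset t == [set~ rho]).

(* Trees that can occur as components of a forest: the lone vertex rho,
   a planted tree (rho on top of a binary tree), or a binary tree without rho. *)
Inductive ftree := FRho | FPlant of btree | FTree of btree.

Definition flabels (f : ftree) : {set L} :=
  match f with FRho => [set rho] | FPlant t => rho |: lset t | FTree t => lset t end.

Definition fbody (f : ftree) : option btree :=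
  match f with FRho => None | FPlant t => Some t | FTree t => Some t end.

Definition fiso (f g : ftree) : bool :=
  match f, g with
  | FRho, FRho => true
  | FPlant a, FPlant b => iso a b
  | FTree a, FTree b => iso a b
  | _, _ => false
  end.

Definition prestr (S : {set L}) (t : btree) : option ftree :=
  if rho \in S then
    match restr (S :\ rho) t with None => Some FRho | Some u => Some (FPlant u) end
  else omap FTree (restr S t).

(* Vertices of the planted tree T (encoded by t) are identified with their
   clusters: rho has cluster L, every other vertex v has cluster L(T_v). *)
Definition vclusters (t : btree) : seq {set L} := [set: L] :: map lset (subtrees t).

(* v is a vertex of T(S): v is an ancestor of some element of S and a
   descendant of every common ancestor of S (i.e. of the lca). *)
Definition inTS (t : btree) (S v : {set L}) : bool :=
  (S :&: v != set0) && all (fun w : {set L} => (S \subset w) ==> (v \subset w)) (vclusters t).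

Definition rootTS (t : btree) (S v : {set L}) : bool :=
  [&& v \in vclusters t, S \subset v &
      all (fun w : {set L} => (S \subset w) ==> (v \subset w)) (vclusters t)].

Definition agrees k (C : 'I_k -> ftree) (t : btree) : Prop :=
  [/\ forall a, exists2 f, prestr (flabels (C a)) t = Some f & fiso (C a) f,
      forall a b, a != b -> forall v, v \in vclusters t ->
         ~~ (inTS t (flabels (C a)) v && inTS t (flabels (C b)) v)
    & \bigcup_(a < k) flabels (C a) = [set: L]].

Definition labels_disjoint k (C : 'I_k -> ftree) : Prop :=
  forall a b, a != b -> [disjoint flabels (C a) & flabels (C b)].

Definition agreement_forest m (T : 'I_m -> btree) k (C : 'I_k -> ftree) : Prop :=
  labels_disjoint C /\ forall p, agrees C (T p).

(* Inheritance graph G(T,F): edge (C_a,C_b), a <> b, iff some tree has a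
   directed path from the root of T(L(C_a)) to the root of T(L(C_b)). *)
Definition inh m (T : 'I_m -> btree) k (C : 'I_k -> ftree) : rel 'I_k :=
  fun a b => (a != b) && [exists p : 'I_m,
    has (fun ra : {set L} => rootTS (T p) (flabels (C a)) ra &&
      has (fun rb : {set L} => rootTS (T p) (flabels (C b)) rb && (rb \subset ra))
          (vclusters (T p))) (vclusters (T p))].

Definition acyclic k (e : rel 'I_k) : Prop :=
  forall a, ~~ [exists b, e a b && connect e b a].

Definition acyclic_agreement_forest m (T : 'I_m -> btree) k (C : 'I_k -> ftree) : Prop :=
  agreement_forest T C /\ acyclic (inh T C).

Definition topological_ordering k (e : rel 'I_k) : Prop :=
  forall a b, e a b -> (a < b)%N.

Definition leaf_ordering (sigma : L -> nat) : Prop :=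
  [/\ {in [set~ rho] &, injective sigma},
      forall l, l != rho -> (sigma l < #|L|.-1)%N
    & forall i, (i < #|L|.-1)%N -> exists2 l, l != rho & sigma l = i].

Variable sigma : L -> nat.

Fixpoint mu (t : btree) : nat :=
  match t with Lf l => sigma l | Nd a b => minn (mu a) (mu b) end.

Definition idx (t : btree) : int :=
  match t with
  | Lf l => Posz (sigma l)
  | Nd a b => (- Posz (maxn (mu a) (mu b)))%R
  end.

Definition prefix_set (j : nat) : {set L} := [set l | (l != rho) && (sigma l <= j)%N].

End Trees.

(* Main.v *)
Require Import Defs.
From mathcomp Require Import all_boot all_order all_algebra.
From Stdlib Require Import ClassicalEpsilon.
Set Implicit Arguments. Unset Strict Implicit. Unset Printing Implicit Defensive.

Section Aux.
Variable L : finType.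
Implicit Types (t u v w a b : btree L) (X Y : {set L}).

Lemma leaves_restr X t :
  (if restr X t is Some y then leaves y else [::]) = [seq l <- leaves t | l \in X].
Proof.
elim: t => [l|a IHa b IHb] /=; first by case: (l \in X).
rewrite filter_cat -IHa -IHb.
by case: (restr X a) => [a'|]; case: (restr X b) => [b'|] //=; rewrite cats0.
Qed.

Lemma restr_Some X t l : l \in leaves t -> l \in X -> exists y, restr X t = Some y.
Proof.
move=> lt lX; have := leaves_restr X t; case: (restr X t) => [y|]; first by eauto.
move=> E; have : l \in [seq l <- leaves t | l \in X] by rewrite mem_filter lX lt.
by rewrite -E.
Qed.

Lemma restr_eq X Y t : {in leaves t, X =i Y} -> restr X t = restr Y t.
Proof.
elim: t => [l|a IHa b IHb] /= H.
  by rewrite H // inE.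
by rewrite IHa ?IHb // => l hl; apply: H; rewrite mem_cat hl ?orbT.
Qed.

Lemma restr_None X t : (forall l, l \in leaves t -> l \notin X) -> restr X t = None.
Proof.
elim: t => [l|a IHa b IHb] /= H.
  by rewrite (negbTE (H l _)) // inE.
by rewrite IHa ?IHb // => l hl; apply: H; rewrite mem_cat hl ?orbT.
Qed.

Lemma restr_comp X Y t : obind (restr Y) (restr X t) = restr (X :&: Y) t.
Proof.
elim: t => [l|a IHa b IHb] /=.
  by rewrite inE; case: (l \in X).
rewrite -IHa -IHb.
case: (restr X a) => [a'|]; case: (restr X b) => [b'|] //=;
 by case: (restr Y a').
Qed.

Lemma is_subtree_refl t : is_subtree t t.
Proof. by case: t => *; left. Qed.

Lemma sub_leaves v t : is_subtree v t -> {subset leaves v <= leaves t}.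
Proof.
elim: t => [l|a IHa b IHb] /=; first by case=> [->|[]].
case=> [->//|[/IHa|/IHb] H x /H]; rewrite mem_cat => ->; by rewrite ?orbT.
Qed.

Lemma sub_uniq v t : is_subtree v t -> uniq (leaves t) -> uniq (leaves v).
Proof.
elim: t => [l|a IHa b IHb] /=; first by case=> [->|[]].
case=> [->//|[/IHa|/IHb] H]; rewrite cat_uniq => /and3P[*]; exact: H.
Qed.

Lemma leaves_ex t : exists z, z \in leaves t.
Proof.
elim: t => [l|a [z Hz] b _]; first by exists l; rewrite inE.
by exists z; rewrite /= mem_cat Hz.
Qed.

Lemma uniq_disj a b z : uniq (leaves a ++ leaves b) -> z \in leaves a -> z \in leaves b -> False.
Proof.
rewrite cat_uniq => /and3P[_ /hasPn H _] za zb.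
by have := H z zb; rewrite /= za.
Qed.

Lemma vcl_sub r t : r \in map (@lset L) (subtrees t) -> exists2 u, is_subtree u t & r = lset u.
Proof.
elim: t => [l|a IHa b IHb] /=.
  by rewrite inE => /eqP->; exists (Lf l) => //; left.
rewrite inE map_cat mem_cat => /orP[/eqP->|/orP[/IHa|/IHb] [u su ->]].
- by exists (Nd a b) => //; left.
- by exists u => //; right; left.
- by exists u => //; right; right.
Qed.

Lemma laminar_sub t v w x : uniq (leaves t) -> is_subtree v t -> is_subtree w t ->
  x \in leaves v -> x \in leaves w ->
  {subset leaves v <= leaves w} \/ {subset leaves w <= leaves v}.
Proof.
elim: t => [l|a IHa b IHb] /=.
  by move=> _ [->|[]] [->|[]]; left.
move=> U [->|Hv] [->|Hw] xv xw.
- by left.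
- by right; apply: sub_leaves; right.
- by left; apply: sub_leaves; right.
have [ua ub] : uniq (leaves a) /\ uniq (leaves b).
  by move: U; rewrite cat_uniq => /and3P[].
case: Hv Hw => Hv [] Hw.
- exact: IHa.
- by case: (uniq_disj U (sub_leaves Hv xv) (sub_leaves Hw xw)).
- by case: (uniq_disj U (sub_leaves Hw xw) (sub_leaves Hv xv)).
- exact: IHb.
Qed.

Lemma vcl_laminar t (v w : {set L}) x : uniq (leaves t) -> v \in vclusters t -> w \in vclusters t ->
  x \in v -> x \in w -> (v \subset w) || (w \subset v).
Proof.
move=> U; rewrite /vclusters !inE => /orP[/eqP->|/vcl_sub[v' sv ->]].
  by rewrite subsetT orbT.
move=> /orP[/eqP->|/vcl_sub[w' sw ->]]; first by rewrite subsetT.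
rewrite !inE => xv xw.
case: (laminar_sub U sv sw xv xw) => H; apply/orP; [left|right];
  by apply/subsetP => z; rewrite !inE; apply: H.
Qed.

Lemma root_exists t S : uniq (leaves t) -> S != set0 -> exists r, rootTS t S r.
Proof.
move=> U /set0Pn[x xS].
have ex : exists n, [exists w in [set w0 | w0 \in vclusters t], (S \subset w) && (#|w| == n)].
  exists #|[set: L]|; apply/existsP; exists [set: L].
  by rewrite inE /vclusters inE eqxx /= subsetT eqxx.
case: (ex_minnP ex) => n /existsP[w0 /and3P[]]; rewrite inE => w0v Sw0 /eqP cw0 minw0.
exists w0; apply/and3P; split => //; apply/allP => w wv; apply/implyP => Sw.
have xw0 : x \in w0 by apply: (subsetP Sw0).
have xw : x \in w by apply: (subsetP Sw).
case/orP: (vcl_laminar U w0v wv xw0 xw) => // ww0.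
have : (n <= #|w|)%N.
  by apply: minw0; apply/existsP; exists w; rewrite inE wv Sw eqxx.
rewrite -cw0 => le.
have /eqP-> : w == w0 by rewrite eqEcard ww0 le.
exact: subxx.
Qed.


Lemma sub_restr X u t y : is_subtree u t -> restr X u = Some y ->
  exists2 z, restr X t = Some z & is_subtree y z.
Proof.
elim: t => [l|a IHa b IHb] /=.
  by case=> [-> E|[]]; exists y => //; apply: is_subtree_refl.
case=> [-> E | [/IHa H /H [z -> yz] | /IHb H /H [z -> yz]]].
- by exists y => //; apply: is_subtree_refl.
- case: (restr X b) => [b'|]; first by exists (Nd z b') => //; right; left.
  by exists z.
- case: (restr X a) => [a'|]; first by exists (Nd a' z) => //; right; right.
  by exists z.
Qed.

Lemma restr_sub_eq X u t : uniq (leaves t) -> is_subtree u t ->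
  (forall l, l \in X -> l \in leaves t -> l \in leaves u) -> restr X t = restr X u.
Proof.
elim: t => [l|a IHa b IHb] /=.
  by move=> _ [->|[]].
move=> U [->//|[Hu|Hu]] H.
- have ua : uniq (leaves a) by move: U; rewrite cat_uniq => /and3P[].
  rewrite (@restr_None X b); last first.
    move=> l lb; apply/negP => lX.
    have lu : l \in leaves u by apply: H; rewrite // mem_cat lb orbT.
    exact: (uniq_disj U (sub_leaves Hu lu) lb).
  rewrite -(IHa ua Hu) => [|l lX la]; first by case: (restr X a).
  by apply: H; rewrite // mem_cat la.
- have ub : uniq (leaves b) by move: U; rewrite cat_uniq => /and3P[].
  rewrite (@restr_None X a); last first.
    move=> l la; apply/negP => lX.
    have lu : l \in leaves u by apply: H; rewrite // mem_cat la.
    exact: (uniq_disj U la (sub_leaves Hu lu)).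
  rewrite -(IHb ub Hu) => // l lX lb.
  by apply: H; rewrite // mem_cat lb orbT.
Qed.

Lemma iso_refl t : iso t t.
Proof. by elim: t => [l|a IHa b IHb] /=; rewrite ?eqxx ?IHa ?IHb. Qed.

Lemma iso_sym a b : iso a b -> iso b a.
Proof.
elim: a b => [l|a1 IH1 a2 IH2] [l'|b1 b2] //=; first by rewrite eq_sym.
case/orP=> /andP[h1 h2]; apply/orP; [left|right]; apply/andP; split; auto.
Qed.

Lemma iso_trans a b c : iso a b -> iso b c -> iso a c.
Proof.
elim: a b c => [l|a1 IH1 a2 IH2] [l'|b1 b2] [l''|c1 c2] //=.
  by move=> /eqP-> /eqP->.
case/orP=> /andP[h1 h2]; case/orP=> /andP[h3 h4]; apply/orP;
  [left|right|right|left]; apply/andP; split; eauto.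
Qed.

Lemma iso_perm a b : iso a b -> perm_eq (leaves a) (leaves b).
Proof.
elim: a b => [l|a1 IH1 a2 IH2] [l'|b1 b2] //=; first by move=> /eqP->.
case/orP=> /andP[h1 h2]; first by rewrite perm_cat ?IH1 ?IH2.
by rewrite perm_catC perm_cat ?IH1 ?IH2.
Qed.

Lemma iso_lset a b : iso a b -> lset a = lset b.
Proof.
move=> /iso_perm P; apply/setP => z; rewrite !inE; exact: perm_mem.
Qed.

Variable sigma : L -> nat.

Lemma iso_mu a b : iso a b -> mu sigma a = mu sigma b.
Proof.
elim: a b => [l|a1 IH1 a2 IH2] [l'|b1 b2] //=; first by move=> /eqP->.
case/orP=> /andP[/IH1-> /IH2->] //; exact: minnC.
Qed.

Lemma iso_idx a b : iso a b -> idx sigma a = idx sigma b.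
Proof.
case: a b => [l|a1 a2] [l'|b1 b2] //=; first by move=> /eqP->.
case/orP=> /andP[/iso_mu-> /iso_mu->] //; by rewrite maxnC.
Qed.

Lemma iso_sub_map w w' v' : iso w w' -> is_subtree v' w' ->
  exists2 v, is_subtree v w & iso v v'.
Proof.
elim: w w' v' => [l|a IHa b IHb] [l'|a' b'] v' //=.
  by move=> H [->|[]]; exists (Lf l) => //; left.
move=> H [->|[Hv|Hv]].
- by exists (Nd a b) => //; left.
- case/orP: H => /andP[h1 h2].
  + by have [v sv iv] := IHa _ _ h1 Hv; exists v => //; right; left.
  + by have [v sv iv] := IHb _ _ h2 Hv; exists v => //; right; right.
- case/orP: H => /andP[h1 h2].
  + by have [v sv iv] := IHb _ _ h2 Hv; exists v => //; right; right.
  + by have [v sv iv] := IHa _ _ h1 Hv; exists v => //; right; left.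
Qed.

Lemma lset_sub v t : is_subtree v t -> lset v \subset lset t.
Proof. by move=> /sub_leaves H; apply/subsetP => z; rewrite !inE; apply: H. Qed.

Lemma sub_not_whole_l a b v : uniq (leaves a ++ leaves b) -> is_subtree v a ->
  lset v != lset (Nd a b).
Proof.
move=> U Hv; apply/eqP => E; have [z zb] := leaves_ex b.
have : z \in lset (Nd a b) by rewrite inE /= mem_cat zb orbT.
rewrite -E inE => /(sub_leaves Hv) za; exact: (uniq_disj U za zb).
Qed.

Lemma sub_not_whole_r a b v : uniq (leaves a ++ leaves b) -> is_subtree v b ->
  lset v != lset (Nd a b).
Proof.
move=> U Hv; apply/eqP => E; have [z za] := leaves_ex a.
have : z \in lset (Nd a b) by rewrite inE /= mem_cat za.
rewrite -E inE => /(sub_leaves Hv) zb; exact: (uniq_disj U za zb).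
Qed.

Lemma sub_disj a b v1 v2 : uniq (leaves a ++ leaves b) -> is_subtree v1 a ->
  is_subtree v2 b -> lset v1 != lset v2.
Proof.
move=> U H1 H2; apply/eqP => E; have [z z1] := leaves_ex v1.
have : z \in lset v1 by rewrite inE.
rewrite E inE => /(sub_leaves H2) zb; exact: (uniq_disj U (sub_leaves H1 z1) zb).
Qed.

Lemma sub_unique w v1 v2 : uniq (leaves w) -> is_subtree v1 w -> is_subtree v2 w ->
  lset v1 = lset v2 -> v1 = v2.
Proof.
elim: w => [l|a IHa b IHb] /=.
  by move=> _ [->|[]] [->|[]].
move=> U.
have [ua ub] : uniq (leaves a) /\ uniq (leaves b).
  by move: U; rewrite cat_uniq => /and3P[].
case=> [->|[H1|H1]] [->|[H2|H2]] E //.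
- by move: (sub_not_whole_l U H2); rewrite E eqxx.
- by move: (sub_not_whole_r U H2); rewrite E eqxx.
- by move: (sub_not_whole_l U H1); rewrite E eqxx.
- exact: IHa.
- by move: (sub_disj U H1 H2); rewrite E eqxx.
- by move: (sub_not_whole_r U H1); rewrite E eqxx.
- by move: (sub_disj U H2 H1); rewrite E eqxx.
- exact: IHb.
Qed.

Definition oiso (x y : option (btree L)) :=
  match x, y with Some a, Some b => iso a b | None, None => true | _, _ => false end.

Lemma iso_restr X a b : iso a b -> oiso (restr X a) (restr X b).
Proof.
elim: a b => [l|a1 IH1 a2 IH2] [l'|b1 b2] //=.
  by move=> /eqP->; case: (l' \in X) => //=; rewrite eqxx.
case/orP=> /andP[/(IH1 _) h1 /(IH2 _) h2].
  move: h1 h2; case: (restr X a1) (restr X b1) => [x1|] [y1|] //=;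
  case: (restr X a2) (restr X b2) => [x2|] [y2|] //= h1 h2; by rewrite h1 h2.
move: h1 h2; case: (restr X a1) (restr X b2) => [x1|] [y1|] //=;
case: (restr X a2) (restr X b1) => [x2|] [y2|] //= h1 h2; by rewrite h1 h2 ?orbT.
Qed.


End Aux.
Lemma per_tree (L : finType) (rho : L) (m : nat) (T : 'I_m -> btree L)
    (k : nat) (C : 'I_k -> ftree L) (sigma : L -> nat) (i : 'I_k) (ls lj : L) (p : 'I_m) :
  planted_over rho (T p) -> agrees rho C (T p) ->
  topological_ordering (inh rho T C) ->
  (forall a b : 'I_k, (a < b)%N -> forall l l',
      l \in flabels rho (C a) :\ rho -> l' \in flabels rho (C b) :\ rho ->
      (sigma l < sigma l')%N) ->
  flabels rho (C i) :\ rho != set0 ->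
  (forall l, l \in flabels rho (C i) :\ rho -> (sigma ls <= sigma l)%N) ->
  lj \in flabels rho (C i) -> lj != rho ->
  exists y, [/\ exists2 Tj, restr (prefix_set rho sigma (sigma lj)) (T p) = Some Tj &
       is_subtree y Tj, uniq (leaves y) &
       exists2 Ci, obind (restr [set l in flabels rho (C i) |
                                  (l != rho) && (sigma ls <= sigma l <= sigma lj)%N])
                         (fbody (C i)) = Some Ci
                 & iso y Ci].
Proof.
move=> /andP[ut /eqP lt] [A1 A2 A3] topo ord ne0 lsmin ljC ljr.
set P := prefix_set rho sigma (sigma lj).
set Q := [set l in flabels rho (C i) | _].
have Si0 : flabels rho (C i) != set0.
  by apply/set0Pn; exists lj.
have [ri Hri] := root_exists ut Si0.
have /and3P[riv Sri /allP rimin] := Hri.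
have [u su lu] : exists2 u, is_subtree u (T p) & lset u = ri :\ rho.
  have := riv; rewrite /vclusters inE => /orP[/eqP->|/vcl_sub [u su ->]].
    exists (T p); first exact: is_subtree_refl.
    by rewrite lt; apply/setP => z; rewrite !inE; case: (z != rho).
  exists u => //; apply/setP => z; rewrite !inE.
  case: (eqVneq z rho) => [->|] //=.
  apply/negbTE/negP => /(sub_leaves su) H.
  have : rho \in lset (T p) by rewrite inE.
  by rewrite lt !inE eqxx.
have key2 : forall l, l \in leaves u -> l \in P -> l \in flabels rho (C i).
  move=> l lu' lP.
  have : l \in \bigcup_(a < k) flabels rho (C a) by rewrite A3 inE.
  case/bigcupP => b _ lb.
  case: (eqVneq b i) => [<- //| bi].
  have : l \in lset u by rewrite inE.
  rewrite lu in_setD1 => /andP[lnr lri].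
  have lsig : (sigma l <= sigma lj)%N by move: lP; rewrite inE => /andP[].
  have bi_lt : (b < i)%N.
    case: (ltngtP b i) => // h.
      have := ord i b h lj l; rewrite !inE ljr ljC lnr lb => /(_ isT isT).
      by rewrite ltnNge lsig.
    by move: bi; rewrite (val_inj h) eqxx.
  have Sb0 : flabels rho (C b) != set0 by apply/set0Pn; exists l.
  have [rb Hrb] := root_exists ut Sb0.
  have /and3P[rbv Srb /allP rbmin] := Hrb.
  have lrb : l \in rb by apply: (subsetP Srb).
  case/orP: (vcl_laminar ut rbv riv lrb lri) => [rbri | ribr].
    have : inh rho T C i b.
      apply/andP; split; first by rewrite eq_sym.
      apply/existsP; exists p; apply/(@hasP _ _ (vclusters (T p))); exists ri => //; rewrite Hri /=.
      by apply/(@hasP _ _ (vclusters (T p))); exists rb => //; rewrite Hrb rbri.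
    by move/topo; rewrite ltnNge (ltnW bi_lt).
  have ib : i != b by rewrite eq_sym.
  have := A2 i b ib ri riv.
  rewrite /inTS; case/negP; apply/andP; split; apply/andP; split.
  - by apply/set0Pn; exists lj; rewrite inE ljC (subsetP Sri).
  - by apply/allP.
  - by apply/set0Pn; exists l; rewrite inE lb lri.
  - apply/allP => w wv; apply/implyP => Sw.
    apply: subset_trans ribr _; exact: (implyP (rbmin w wv)).
have QS : forall l, l \in Q -> (l \in flabels rho (C i)) && (l != rho).
  by move=> l; rewrite inE => /and3P[-> -> _].
have Qu : forall l, l \in Q -> l \in leaves u.
  move=> l /QS /andP[lC lr].
  have : l \in lset u by rewrite lu !inE lr (subsetP Sri).
  by rewrite inE.
have PQ : {in leaves u, P =i Q}.
  move=> l lu'; apply/idP/idP => [lP|lQ].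
    have lC := key2 l lu' lP.
    move: lP; rewrite !inE lC => /andP[lr ->]; rewrite lr /= andbT.
    by apply: lsmin; rewrite !inE lr.
  by move: lQ; rewrite !inE => /and3P[_ -> /andP[_ ->]].
have ljP : lj \in P by rewrite inE ljr leqnn.
have lju : lj \in leaves u.
  have : lj \in lset u by rewrite lu !inE ljr (subsetP Sri).
  by rewrite inE.
have [y Hy] := restr_Some lju ljP.
have [z Hz yz] := sub_restr su Hy.
exists y; split.
- by exists z.
- have := leaves_restr P u; rewrite Hy => ->.
  exact/filter_uniq/(sub_uniq su ut).
have [b [f' [B [Eb Ef' Hbf QB]]]] : exists b f' B,
    [/\ fbody (C i) = Some b, restr B (T p) = Some f', iso b f' &
        flabels rho (C i) :\ rho \subset B].
  have [f Hf Hiso] := A1 i.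
  move: Hf Hiso ne0; rewrite /prestr.
  case: (C i) => [|b|b] /=.
  - by rewrite setDv eqxx.
  - rewrite setU11; case E: (restr _ _) => [f'|] [<-] //= Hiso _.
    by exists b, f', ((rho |: lset b) :\ rho); split.
  - case: (rho \in lset b).
      by case: (restr _ _) => [f'|] [<-].
    case E: (restr _ _) => [f'|] //= [<-] /= Hiso _.
    by exists b, f', (lset b); split => //; apply: subsetDl.
have E1 : restr Q f' = Some y.
  have := restr_comp B Q (T p); rewrite Ef' /= => ->.
  rewrite (@restr_eq _ (B :&: Q) Q); last first.
    move=> l _; rewrite inE; case lQ: (l \in Q); rewrite ?andbF // andbT.
    by apply: (subsetP QB); move/QS: lQ => /andP[lC lr]; rewrite !inE lr.
  rewrite (restr_sub_eq ut su) => [|l lQ _]; last exact: Qu.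
  by rewrite -Hy; apply/esym/restr_eq.
have := iso_restr Q Hbf; rewrite E1.
case E2: (restr Q b) => [c|] //= Hc.
exists c; last exact: iso_sym.
by rewrite Eb /= E2.
Qed.

Theorem lemma1 (L : finType) (rho : L) (m : nat) (T : 'I_m -> btree L)
    (k : nat) (C : 'I_k -> ftree L) (sigma : L -> nat) (i : 'I_k) (ls lj : L) :
  (2 <= m)%N ->
  (forall p, planted_over rho (T p)) ->
  acyclic_agreement_forest rho T C ->
  topological_ordering (inh rho T C) ->
  leaf_ordering rho sigma ->
  (forall a b : 'I_k, (a < b)%N -> forall l l',
      l \in flabels rho (C a) :\ rho -> l' \in flabels rho (C b) :\ rho ->
      (sigma l < sigma l')%N) ->
  flabels rho (C i) :\ rho != set0 ->
  ls \in flabels rho (C i) :\ rho ->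
  (forall l, l \in flabels rho (C i) :\ rho -> (sigma ls <= sigma l)%N) ->
  lj \in flabels rho (C i) -> lj != rho -> (sigma ls <= sigma lj)%N ->
  exists x : 'I_m -> btree L,
    (forall p, exists2 Tj, restr (prefix_set rho sigma (sigma lj)) (T p) = Some Tj &
       is_subtree (x p) Tj /\
       exists2 Ci, obind (restr [set l in flabels rho (C i) |
                                  (l != rho) && (sigma ls <= sigma l <= sigma lj)%N])
                         (fbody (C i)) = Some Ci
                 & iso (x p) Ci) /\
    (forall (p p' : 'I_m) (v v' : btree L),
       is_subtree v (x p) -> is_subtree v' (x p') -> lset v = lset v' ->
       idx sigma v = idx sigma v').
Proof.
move=> _ Hpl [[_ Hag] _] topo _ ord ne0 _ lsmin ljC ljr _.
have H := fun p => per_tree (Hpl p) (Hag p) topo ord ne0 lsmin ljC ljr.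
pose x p := proj1_sig (constructive_indefinite_description _ (H p)).
have Hx p : _ := proj2_sig (constructive_indefinite_description _ (H p)).
exists x; split.
- move=> p; case: (Hx p) => [[Tj h1 h2] _ [Ci h3 h4]].
  by exists Tj => //; split => //; exists Ci.
- move=> p p' v v' sv sv' ev.
  case: (Hx p) => [_ u1 [Ci h3 h4]]; case: (Hx p') => [_ u2 [Ci' h3' h4']].
  rewrite h3 in h3'; case: h3' => Ee; rewrite -Ee in h4'.
  have ixx : iso (x p) (x p') := iso_trans h4 (iso_sym h4').
  have [w sw iw] := iso_sub_map ixx sv'.
  have Ew : w = v by apply: (sub_unique u1 sw sv); rewrite (iso_lset iw) ev.
  by rewrite -Ew; apply: iso_idx.
Qed.
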